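(* Let $(N,\underline X)\in\aleph^{FGM*}$ with $E[X]<\infty$. For every $n\in A_N$, $$E[X_1\mid N=n]=\sum_{(i_0,i_1)\in\{0,1\}^2}f_{I_0,I_1}(i_0,i_1)\frac{\gamma_{N_{[1+i_0]}}(n)}{\gamma_N(n)}\mu_{X_{[1+i_1]}}=E[X]+\frac{\theta_{01}}{4}\frac{\gamma_{N_{[2]}}(n)-\gamma_{N_{[1]}}(n)}{\gamma_N(n)}\big(\mu_{X_{[2]}}-\mu_{X_{[1]}}\big),$$ where $f_{I_0,I_1}(i_0,i_1)=\tfrac14\big(1+(-1)^{i_0+i_1}\theta_{01}\big)$.
   Context: Collective risk model (CRM): $N$ is a random variable with values in $\mathbb{N}_0$, cdf $F_N$, pmf $\gamma_N(n)=\Pr(N=n)$ and support $A_N=\{n:\gamma_N(n)>0\}$; $\underline X=\{X_j\}_{j\ge1}$ is a sequence of identically distributed strictly positive random variables with common cdf $F_X$ (generic copy $X$). A $d$-variate FGM copula with parameters $\theta_{j_1\dots j_k}$ is $C(u_1,\dots,u_d)=\prod_{m=1}^d u_m\big(1+\sum_{k=2}^d\sum_{j_1<\dots<j_k}\theta_{j_1\dots j_k}\bar u_{j_1}\cdots\bar u_{j_k}\big)$, $\bar u=1-u$, with parameters such that $1+\sum_{k}\sum_{j_1<\dots<j_k}\theta_{j_1\dots j_k}\varepsilon_{j_1}\cdots\varepsilon_{j_k}\ge0$ for all $\varepsilon\in\{-1,1\}^d$. A CRM belongs to $\aleph^{FGM}$ if for every $k\in\mathbb{N}_1$, $k\le\sup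 A_N$, $F_{N,X_1,\dots,X_k}(n,x_1,\dots,x_k)=C_k(F_N(n),F_X(x_1),\dots,F_X(x_k))$ for a $(k+1)$-variate FGM copula $C_k$ with coordinates indexed $0,\dots,k$ (index $0$ for $N$). It belongs to $\aleph^{FGM*}$ if in addition $(N,X_1,\dots,X_k)\overset d=(N,X_{\pi(1)},\dots,X_{\pi(k)})$ for all such $k$ and all permutations $\pi$; then $\theta_{0j}=\theta_{01}$, $\theta_{ij}=\theta_{12}$, $\theta_{0ij}=\theta_{012}$ for all $1\le i<j$. For a random variable $Y$, $Y_{[1]}$, $Y_{[2]}$ denote the minimum and maximum of two iid copies of $Y$, $\mu_{Y_{[j]}}=E[Y_{[j]}]$, and $\gamma_{N_{[j]}}(n)=\Pr(N_{[j]}=n)$. *)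

(* Defs.v *)
From HB Require Import structures.
From mathcomp Require Import all_boot all_order all_algebra all_fingroup.
From mathcomp Require Import all_classical all_reals all_analysis.
Set Implicit Arguments. Unset Strict Implicit. Unset Printing Implicit Defensive.
Import Order.TTheory GRing.Theory Num.Theory.
Local Open Scope classical_set_scope.
Local Open Scope ring_scope.

Section Defs.
Context {R : realType}.

(** d-variate FGM copula with parameters theta S indexed by the subsets
    S = {j_1 < ... < j_k} of the coordinates with k >= 2
    (values of theta on subsets of size < 2 are irrelevant). *)
Definition fgm_copula (d : nat) (theta : {set 'I_d} -> R) (u : 'I_d -> R) : R :=
  (\prod_(m < d) u m) *
  (1 + \sum_(S : {set 'I_d} | (1 < #|S|)%N) theta S * \prod_(j in S) (1 - u j)).

Definition fgm_admissible (d : nat) (theta : {set 'I_d} -> R) : Prop :=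
  forall eps : 'I_d -> bool,
    0 <= 1 + \sum_(S : {set 'I_d} | (1 < #|S|)%N)
              theta S * \prod_(j in S) (if eps j then 1 else -1).

Context {dT : measure_display} {T : measurableType dT} (P : probability T R).

Definition cdfR (Y : {RV P >-> R}) (y : R) : R :=
  fine (P [set w | Y w <= y]).

Definition pmfN (N : {RV P >-> R}) (n : nat) : R :=
  fine (P [set w | N w = n%:R]).

(** joint cdf of (N, X_1, ..., X_k); the random variable X_{i+1} is X i *)
Definition joint_cdf (N : {RV P >-> R}) (X : nat -> {RV P >-> R}) (k : nat)
    (y : R) (x : 'I_k -> R) : \bar R :=
  P [set w | N w <= y /\ forall i : 'I_k, X i w <= x i].

Definition joint_cdf_perm (N : {RV P >-> R}) (X : nat -> {RV P >-> R}) (k : nat)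
    (s : 'S_k) (y : R) (x : 'I_k -> R) : \bar R :=
  P [set w | N w <= y /\ forall i : 'I_k, X (s i) w <= x i].

Definition condexp_eq (Y N : {RV P >-> R}) (n : nat) : R :=
  fine (\int[P]_(w in [set w | N w = n%:R]) (Y w)%:E) / pmfN N n.

End Defs.

Definition ostat2 {R : realType} (j : nat) (a b : R) : R :=
  if j == 1%N then Num.min a b else Num.max a b.

Section OrderStats.
Context {R : realType} {dT : measure_display} {T : measurableType dT}
  (P : probability T R).
Local Open Scope ereal_scope.

(** gamma_{N_[j]}(n) = Pr(N_[j] = n), where N_[1], N_[2] are the minimum and
    maximum of two iid copies of N (realized on the product of two copies of
    the law of N) *)
Definition pmf_ostat (N : {RV P >-> R}) (j : nat) (n : nat) : R :=
  fine ((distribution P N \x distribution P N)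
          [set z : R * R | ostat2 j z.1 z.2 = n%:R]).

Definition mean_ostat (Y : {RV P >-> R}) (j : nat) : R :=
  fine (\int[distribution P Y \x distribution P Y]_z (ostat2 j z.1 z.2)%:E).

End OrderStats.

Arguments cdfR {R dT T} P Y y.
Arguments pmfN {R dT T} P N n.
Arguments joint_cdf {R dT T} P N X {k} y x.
Arguments joint_cdf_perm {R dT T} P N X {k} s y x.
Arguments condexp_eq {R dT T} P Y N n.
Arguments pmf_ostat {R dT T} P N j n.
Arguments mean_ostat {R dT T} P Y j.

(* Main.v *)
Require Import Defs.
From HB Require Import structures.
From mathcomp Require Import all_boot all_order all_algebra all_fingroup.
From mathcomp Require Import all_classical all_reals all_analysis.
From mathcomp Require Import measurable_realfun.
From mathcomp Require Import ring lra.
Import Order.TTheory GRing.Theory Num.Theory.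
Set Implicit Arguments. Unset Strict Implicit. Unset Printing Implicit Defensive.
Local Open Scope classical_set_scope.
Local Open Scope ring_scope.

Lemma card_gt1_I2 (S : {set 'I_2}) : (1 < #|S|)%N = (S == [set ord0; ord_max]%SET).
Proof.
have -> : [set ord0; ord_max]%SET = [set: 'I_2]%SET.
  by apply/setP => i; rewrite !inE; case: i => [[|[|//]] Hi].
rewrite eqEcard finset.subsetT /= cardsT card_ord /=.
by have := max_card (pred_of_set S); rewrite card_ord; case: #|S| => [|[|[|]]].
Qed.

Lemma fgm2 (R : realType) (th : {set 'I_2} -> R) (u : 'I_2 -> R) :
  fgm_copula th u = u ord0 * u ord_max *
     (1 + th [set ord0; ord_max]%SET * ((1 - u ord0) * (1 - u ord_max))).
Proof.
rewrite /fgm_copula.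
rewrite (eq_bigl (fun S => S == [set ord0; ord_max]%SET)); last by move=> S; rewrite card_gt1_I2.
rewrite big_pred1_eq big_ord_recr /= big_ord1.
have -> : \prod_(j in [set ord0; ord_max]%SET) (1 - u j) = (1 - u ord0) * (1 - u ord_max).
  rewrite big_setU1 ?inE //= big_set1 //.
have -> : widen_ord (leqnSn 1) ord0 = ord0 :> 'I_2 by apply/val_inj.
done.
Qed.

Section G.
Context (R : realType).
Definition gmax (z : R * R) : R := Num.max (Num.max z.1 z.2) 0.
Definition gmin (z : R * R) : R := Num.max (Num.min z.1 z.2) 0.
Lemma gmax_meas : measurable_fun setT gmax.
Proof.
apply: (measurable_maxr (f := fun z : R * R => Num.max z.1 z.2) (g := cst 0)); last exact: measurable_cst.
exact: (measurable_maxr (f := fst) (g := snd)).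
Qed.
Lemma gmin_meas : measurable_fun setT gmin.
Proof.
apply: (measurable_maxr (f := fun z : R * R => Num.min z.1 z.2) (g := cst 0)); last exact: measurable_cst.
exact: (measurable_minr (f := fst) (g := snd)).
Qed.
HB.instance Definition _ := isMeasurableFun.Build _ _ _ _ gmax gmax_meas.
HB.instance Definition _ := isMeasurableFun.Build _ _ _ _ gmin gmin_meas.
End G.

Section Main.
Context (R : realType) (dT : measure_display) (T : measurableType dT) (P : probability T R).
Local Open Scope ereal_scope.

Lemma mle (Y : {RV P >-> R}) r : measurable [set w | Y w <= r]%R.
Proof.
have -> : [set w | Y w <= r]%R = Y @^-1` `]-oo, r].
  by apply/seteqP; split => w /=; rewrite in_itv.
exact: measurable_funPTI.
Qed.

Lemma meq (Y : {RV P >-> R}) r : measurable [set w | Y w = r].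
Proof. exact: (measurable_funPTI Y (measurable_set1 r)). Qed.

Lemma Pfin (A : set T) : measurable A -> (fine (P A))%:E = P A.
Proof. by move=> mA; rewrite fineK// fin_num_measure. Qed.

Lemma Pge0R (A : set T) : (0 <= fine (P A))%R.
Proof. exact: fine_ge0. Qed.

Lemma Ple1R (A : set T) : measurable A -> (fine (P A) <= 1)%R.
Proof. by move=> mA; rewrite -lee_fin Pfin// probability_le1. Qed.

Lemma ccdfE (Y : {RV P >-> R}) r : ccdf Y r = (1 - cdfR P Y r)%:E.
Proof.
rewrite /ccdf /distribution /pushforward /cdfR.
have -> : Y @^-1` `]r, +oo[ = ~` [set w | Y w <= r]%R.
  by apply/seteqP; split => w /=; rewrite in_itv /= andbT ltNge => /negP.
rewrite probability_setC; last exact: mle.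
by rewrite EFinD EFinN Pfin //; exact: mle.
Qed.


Let leb := @lebesgue_measure R.
Let I0 : set R := `[0%R, +oo[%classic.

Lemma mI0 : measurable (I0 : set (measurableTypeR R)). Proof. exact: measurable_itv. Qed.

Lemma mt (Y : {RV P >-> R}) : measurable_fun setT (fun r => 1 - cdfR P Y r)%R.
Proof.
have -> : (fun r => 1 - cdfR P Y r)%R = (fun r => fine (ccdf Y r)).
  by apply/funext => r; rewrite ccdfE.
exact: (measurableT_comp (fine_measurable measurableT) (ccdf_measurable Y)).
Qed.

Lemma cdfR_ge0 (Y : {RV P >-> R}) r : (0 <= cdfR P Y r)%R.
Proof. exact: Pge0R. Qed.
Lemma cdfR_le1 (Y : {RV P >-> R}) r : (cdfR P Y r <= 1)%R.
Proof. exact/Ple1R/mle. Qed.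

Lemma ccdf_int (Y : {RV P >-> R}) : (forall w, 0 < Y w)%R ->
  P.-integrable [set: T] (EFin \o Y) ->
  'E_P[Y] = \int[leb]_(r in I0) (1 - cdfR P Y r)%:E /\
  leb.-integrable I0 (EFin \o (fun r => 1 - cdfR P Y r)%R).
Proof.
move=> Ypos iY.
have E : 'E_P[Y] = \int[leb]_(r in I0) (1 - cdfR P Y r)%:E.
  rewrite ge0_expectation_ccdf; last by move=> w; exact/ltW.
  by apply: eq_integral => r _; rewrite ccdfE.
split => //; apply/integrableP; split.
  apply/measurable_EFinP.
  exact: (measurable_funS measurableT (@subsetT _ I0) (mt Y)).
have -> : \int[leb]_(x in I0) `|(EFin \o (fun r : R => (1 - cdfR P Y r)%R)) x|
   = \int[leb]_(r in I0) (1 - cdfR P Y r)%:E.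
  apply: eq_integral => r _ /=; rewrite ger0_norm // subr_ge0; exact: cdfR_le1.
rewrite -E expectation_def.
exact: (integrable_lty measurableT iY).
Qed.


Lemma intZ (f : R -> R) (al : R) : leb.-integrable I0 (EFin \o f) ->
  leb.-integrable I0 (EFin \o (fun r => al * f r)%R) /\
  \int[leb]_(r in I0) (al * f r)%:E = (al * fine (\int[leb]_(r in I0) (f r)%:E))%:E.
Proof.
move=> fi; have fi' := integrableZl mI0 al fi.
split.
  by apply: (eq_integrable mI0 _ _ _ fi') => r _ /=; rewrite EFinM.
transitivity (\int[leb]_(r in I0) (al%:E * (EFin \o f) r)); first by apply: eq_integral => r _; rewrite EFinM.
rewrite (integralZl mI0 fi).
rewrite EFinM fineK //; exact: (integrable_fin_num mI0 fi).
Qed.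

Lemma lin_int (f g : R -> R) (al be : R) : leb.-integrable I0 (EFin \o f) ->
  leb.-integrable I0 (EFin \o g) ->
  \int[leb]_(r in I0) (al * f r + be * g r)%:E =
  (al * fine (\int[leb]_(r in I0) (f r)%:E) + be * fine (\int[leb]_(r in I0) (g r)%:E))%:E.
Proof.
move=> fi gi.
have [fi' ef] := intZ al fi.
have [gi' eg] := intZ be gi.
transitivity (\int[leb]_(r in I0) (((EFin \o (fun r => al * f r)%R) \+ (EFin \o (fun r => be * g r)%R)) r)).
  by apply: eq_integral => r _; rewrite /= EFinD.
rewrite (integralD_EFin mI0 fi' gi') /= ef eg; by [].
Qed.

Lemma qint (Y : {RV P >-> R}) : leb.-integrable I0 (EFin \o (fun r => 1 - cdfR P Y r)%R) ->
  leb.-integrable I0 (EFin \o (fun r => cdfR P Y r * (1 - cdfR P Y r))%R).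
Proof.
move=> ti; apply: le_integrable ti; first exact: mI0.
  apply/measurable_EFinP.
  apply: (measurable_funS measurableT) => //.
  have mt' := mt Y.
  have -> : (fun r => cdfR P Y r * (1 - cdfR P Y r))%R = (fun r => (1 - (1 - cdfR P Y r)) * (1 - cdfR P Y r))%R.
    by apply/funext => r; congr (_ * _)%R; ring.
  apply: measurable_funM => //; apply: measurable_funB => //; exact: measurable_cst.
move=> r _ /=; rewrite !ger0_norm ?lee_fin.
- by rewrite ler_piMl ?subr_ge0 ?cdfR_le1 ?cdfR_ge0.
- by rewrite subr_ge0 cdfR_le1.
- by rewrite mulr_ge0 ?subr_ge0 ?cdfR_le1 ?cdfR_ge0.
Qed.

Definition pr (A : set T) : R := fine (P A).

Lemma prU (A B : set T) : measurable A -> measurable B -> A `&` B = set0 ->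
  pr (A `|` B) = (pr A + pr B)%R.
Proof.
move=> mA mB AB0; rewrite /pr measureU // fineD //; exact: fin_num_measure.
Qed.

Lemma prD (A B : set T) : measurable A -> measurable B ->
  pr (A `\` B) = (pr A - pr (A `&` B))%R.
Proof.
move=> mA mB; have hA : P A < +oo by apply: (le_lt_trans (probability_le1 P mA)); exact: ltry.
rewrite /pr measureD // fineB // ?fin_num_measure //; exact: measurableI.
Qed.

Lemma prE (A : set T) : measurable A -> (pr A)%:E = P A.
Proof. exact: Pfin. Qed.

Lemma natR_le_sub1 (m n : nat) : (m%:R <= n%:R - 1 :> R)%R = (m < n)%N.
Proof. by rewrite lerBrDr natr1 ler_nat. Qed.

Section NN.
Variable N : {RV P >-> R}.
Hypothesis Nint : forall w, exists m : nat, N w = m%:R.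

Lemma splitN (n : nat) (C : set T) : measurable C ->
  pr ([set w | N w <= n%:R]%R `&` C) =
  (pr ([set w | N w <= n%:R - 1]%R `&` C) + pr ([set w | N w = n%:R] `&` C))%R.
Proof.
move=> mC; rewrite -prU; first last.
- apply/seteqP; split => // w /= [[h1 _] [h2 _]].
  by move: h1; rewrite h2 natR_le_sub1 ltnn.
- by apply: measurableI => //; exact: meq.
- by apply: measurableI => //; exact: mle.
congr pr; apply/seteqP; split => w /=.
- case=> h1 Cw; have [m Nm] := Nint w; move: h1; rewrite Nm ler_nat leq_eqVlt.
  case/orP => [/eqP -> | mn]; [by right | left; split => //].
  by rewrite natR_le_sub1.
- have [m Nm] := Nint w; rewrite Nm.
  case=> [[h1 Cw] | [h1 Cw]]; split => //; last by rewrite h1.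
  by move: h1; rewrite natR_le_sub1 ler_nat => /ltnW.
Qed.


Lemma pmfN_pr (m : nat) : pmfN P N m = pr [set w | N w = m%:R].
Proof. by []. Qed.

Lemma degen_null : (forall m, (0 < m)%N -> pmfN P N m = 0%R) ->
  P (~` [set w | N w = 0%:R]) = 0.
Proof.
move=> h; apply/eqP; rewrite eq_le measure_ge0 andbT.
have := @measure_sigma_subadditive _ _ _ P (~` [set w | N w = 0%:R])
  (fun m => [set w | N w = m.+1%:R]) (fun m => meq N _) (measurableC (meq N _)).
move=> /(_ _) H; apply: le_trans (H _) _.
  move=> w /= Nw; have [m Nm] := Nint w; case: m Nm => [|m] Nm; first by [].
  by exists m => //.
rewrite eseries0 // => i _ _ /=.
have := h i.+1 isT; rewrite pmfN_pr /pr => h0.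
by rewrite -(Pfin (meq N i.+1%:R)) h0.
Qed.

Lemma degen_prI (C : set T) : measurable C ->
  (forall m, (0 < m)%N -> pmfN P N m = 0%R) ->
  pr ([set w | N w = 0%:R] `&` C) = pr C.
Proof.
move=> mC h.
have mD : measurable [set w | N w = 0%:R] by exact: meq.
have mD' : measurable (~` [set w | N w = 0%:R]) by exact: measurableC.
have eC : pr C = (pr ([set w | N w = 0%:R] `&` C) + pr (~` [set w | N w = 0%:R] `&` C))%R.
  rewrite -prU; first by rewrite -setIUl setUCr setTI.
  - exact: measurableI.
  - exact: measurableI.
  - by rewrite setIACA setICr set0I.
have h0 : pr (~` [set w | N w = 0%:R] `&` C) = 0%R.
  rewrite /pr; have : P (~` [set w | N w = 0%:R] `&` C) = 0.
    apply/eqP; rewrite eq_le measure_ge0 andbT -(degen_null h).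
    apply: le_measure; rewrite ?inE /=.
    - exact: measurableI.
    - exact: mD'.
    - exact: subIsetl.
  by move=> ->.
by rewrite eC h0 addr0.
Qed.

End NN.

Section YY.
Variables (X0 : {RV P >-> R}) (D : set T) (mD : measurable D).
Hypothesis Xpos : forall w, (0 < X0 w)%R.

Definition Yv : {RV P >-> R} := (X0 * indic_mfun D mD)%R.

Arguments Yv : simpl never.

Lemma YvE w : Yv w = if w \in D then X0 w else 0%R.
Proof. by rewrite /Yv mfunM /= /indic_mfun mindicE /=; case: (w \in D); rewrite ?mulr1 ?mulr0. Qed.

Variable Y : {RV P >-> R}.
Hypothesis HY : forall w, Y w = if w \in D then X0 w else 0%R.

Lemma Yv_ge0 w : (0 <= Y w)%R.
Proof. by rewrite HY; case: ifP => // _; exact: ltW. Qed.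

Lemma ccdfYv r : (0 <= r)%R ->
  ccdf Y r = (pr D - pr (D `&` [set w | X0 w <= r]%R))%:E.
Proof.
move=> r0; rewrite /ccdf /distribution /pushforward -prD; last 2 first.
  exact: mD.
  exact: mle.
have -> : Y @^-1` `]r, +oo[ = D `\` [set w | X0 w <= r]%R.
  apply/seteqP; split => w /=; rewrite in_itv /= andbT HY.
    case: ifPn => [/set_mem wD | _]; last by rewrite ltNge r0.
    by rewrite ltNge => /negP.
  by case=> wD; rewrite (mem_set wD) ltNge => /negP.
rewrite prE //; apply: measurableD => //; exact: mle.
Qed.

Lemma EYv : 'E_P[Y] = \int[P]_(w in D) (X0 w)%:E.
Proof.
rewrite expectation_def [RHS]integral_mkcond; apply: eq_integral => w _.
by rewrite /patch HY; case: ifP.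
Qed.

End YY.

Lemma mLe (r : R) : measurable [set x : R | x <= r]%R.
Proof.
have -> : [set x : R | x <= r]%R = `]-oo, r]%classic.
  by apply/seteqP; split => w /=; rewrite in_itv.
exact: measurable_itv.
Qed.

Section QQ.
Variable X0 : {RV P >-> R}.
Hypothesis Xpos : forall w, (0 < X0 w)%R.
Local Notation F r := (cdfR P X0 r).
Local Notation mu := (distribution P X0).
Local Notation Q := (mu \x mu)%E.

Lemma muLe r : mu [set x | x <= r]%R = (F r)%:E.
Proof. exact: (esym (Pfin (mle X0 r))). Qed.

Lemma muGt r : mu [set x | r < x]%R = (1 - F r)%:E.
Proof.
have -> : [set x | r < x]%R = ~` [set x | x <= r]%R.
  by apply/seteqP; split => x /=; rewrite ltNge => /negP.
rewrite probability_setC; last exact: mLe.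
transitivity (1 - mu [set x | x <= r]%R)%E; first by [].
by rewrite muLe EFinB.
Qed.

Lemma muLe0 : mu [set x | x <= 0]%R = 0.
Proof.
rewrite /distribution /pushforward.
have -> : X0 @^-1` [set x | x <= 0]%R = set0.
  by apply/seteqP; split => w //=; rewrite leNgt Xpos.
exact: measure0.
Qed.

Lemma ccdf_gmax r : (0 <= r)%R ->
  ccdf (@gmax R : {RV Q >-> R}) r = (1 - F r + F r * (1 - F r))%:E.
Proof.
move=> r0.
have E : (@gmax R : {RV Q >-> R}) @^-1` `]r, +oo[ =
    ~` ([set x | x <= r]%R `*` [set x | x <= r]%R).
  apply/seteqP; split => z /=; rewrite in_itv /= andbT /gmax.
    rewrite !lt_max [(r < 0)%R]ltNge r0 orbF => /orP[] h [h1 h2].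
      by rewrite ltNge h1 in h.
    by rewrite ltNge h2 in h.
  move=> /not_andP[] h; rewrite !lt_max; apply/orP; left; apply/orP.
    by left; rewrite ltNge; apply/negP.
  by right; rewrite ltNge; apply/negP.
transitivity (Q (~` ([set x | x <= r]%R `*` [set x | x <= r]%R))).
  by rewrite /ccdf /distribution /pushforward E.
rewrite probability_setC; last by apply: measurableX; exact: mLe.
have hP : Q ([set x | x <= r]%R `*` [set x | x <= r]%R) = (F r * F r)%:E.
  by rewrite product_measure1E; [rewrite EFinM -muLe|exact: mLe|exact: mLe].
transitivity (1 - Q ([set x | x <= r]%R `*` [set x | x <= r]%R))%E; first by [].
rewrite hP -EFinB; congr EFin; ring.
Qed.

Lemma ccdf_gmin r : (0 <= r)%R ->
  ccdf (@gmin R : {RV Q >-> R}) r = (1 - F r - F r * (1 - F r))%:E.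
Proof.
move=> r0.
have E : (@gmin R : {RV Q >-> R}) @^-1` `]r, +oo[ =
    ([set x | r < x]%R `*` [set x | r < x]%R).
  apply/seteqP; split => z /=; rewrite in_itv /= andbT /gmin.
    by rewrite !lt_max [(r < 0)%R]ltNge r0 orbF lt_min => /andP.
  by case=> h1 h2; rewrite lt_max lt_min h1 h2.
transitivity (Q ([set x | r < x]%R `*` [set x | r < x]%R)).
  by rewrite /ccdf /distribution /pushforward E.
have mG : measurable [set x : R | r < x]%R.
  have -> : [set x : R | r < x]%R = ~` [set x | x <= r]%R.
    by apply/seteqP; split => x /=; rewrite ltNge => /negP.
  by apply: measurableC; exact: mLe.
rewrite product_measure1E //.
have -> : (1 - F r - F r * (1 - F r))%R = ((1 - F r) * (1 - F r))%R by ring.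
by rewrite EFinM -muGt.
Qed.

Lemma QX (A B : set R) : measurable A -> measurable B -> Q (A `*` B) = (mu A * mu B)%E.
Proof. by move=> mA mB; rewrite product_measure1E. Qed.

Lemma mfstsnd (f : R -> R -> R) : (forall a b, f a b = Num.max a b) \/ (forall a b, f a b = Num.min a b) ->
  measurable_fun [set: R * R] (fun z : R * R => (f z.1 z.2)%:E).
Proof.
case=> h; apply/measurable_EFinP.
- rewrite (_ : (fun z : R * R => f z.1 z.2) = (fst \max snd)); last by apply/funext => z; rewrite h.
  exact: measurable_maxr.
- rewrite (_ : (fun z : R * R => f z.1 z.2) = (fst \min snd)); last by apply/funext => z; rewrite h.
  exact: measurable_minr.
Qed.

Lemma int_max : \int[Q]_z (Num.max z.1 z.2)%:E = \int[Q]_z (@gmax R z)%:E.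
Proof.
apply: ae_eq_integral => //.
- by apply: (@mfstsnd (fun a b => Num.max a b)); left.
- by apply/measurable_EFinP; exact: gmax_meas.
exists ([set x | x <= 0]%R `*` [set: R]); split.
- by apply: measurableX => //; exact: mLe.
- change (Q ([set x | x <= 0]%R `*` [set: R]) = 0).
  by rewrite (QX (mLe 0) measurableT) muLe0 mul0e.
move=> z /= h; split => //; rewrite leNgt; apply/negP => z1; apply: h => _.
by rewrite /gmax; congr EFin; apply/esym/max_idPl; rewrite le_max ltW.
Qed.

Lemma int_min : \int[Q]_z (Num.min z.1 z.2)%:E = \int[Q]_z (@gmin R z)%:E.
Proof.
apply: ae_eq_integral => //.
- by apply: (@mfstsnd (fun a b => Num.min a b)); right.
- by apply/measurable_EFinP; exact: gmin_meas.
exists (([set x | x <= 0]%R `*` [set: R]) `|` ([set: R] `*` [set x | x <= 0]%R)); split.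
- by apply: measurableU; apply: measurableX => //; exact: mLe.
- apply/eqP; rewrite eq_le measure_ge0 andbT.
  apply: le_trans (measureU2 _ _ _) _.
  + by apply: measurableX => //; exact: mLe.
  + by apply: measurableX => //; exact: mLe.
  change (Q ([set x | x <= 0]%R `*` [set: R]) + Q ([set: R] `*` [set x | x <= 0]%R) <= 0).
  rewrite (QX (mLe 0) measurableT) (QX measurableT (mLe 0)).
  by rewrite muLe0 mul0e mule0 adde0.
move=> z /= h; apply: contrapT => nh; apply: h => _.
have z1 : (0 < z.1)%R by rewrite ltNge; apply/negP => h1; apply: nh; left.
have z2 : (0 < z.2)%R by rewrite ltNge; apply/negP => h1; apply: nh; right.
by rewrite /gmin; congr EFin; apply/esym/max_idPl; rewrite le_min !ltW.
Qed.

Lemma int_gmax : \int[Q]_z (Num.max z.1 z.2)%:E =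
  \int[leb]_(r in I0) (1 - F r + F r * (1 - F r))%:E.
Proof.
rewrite int_max; transitivity 'E_Q[@gmax R : {RV Q >-> R}]; first by rewrite expectation_def.
rewrite ge0_expectation_ccdf; last by move=> z; rewrite /gmax le_max lexx orbT.
apply: eq_integral => r; rewrite inE /= in_itv /= andbT => r0.
exact: ccdf_gmax.
Qed.

Lemma int_gmin : \int[Q]_z (Num.min z.1 z.2)%:E =
  \int[leb]_(r in I0) (1 - F r - F r * (1 - F r))%:E.
Proof.
rewrite int_min; transitivity 'E_Q[@gmin R : {RV Q >-> R}]; first by rewrite expectation_def.
rewrite ge0_expectation_ccdf; last by move=> z; rewrite /gmin le_max lexx orbT.
apply: eq_integral => r; rewrite inE /= in_itv /= andbT => r0.
exact: ccdf_gmin.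
Qed.

Lemma mean2 : mean_ostat P X0 2 =
  fine (\int[leb]_(r in I0) (1 - F r + F r * (1 - F r))%:E).
Proof. rewrite /mean_ostat /ostat2 /=; exact: (congr1 fine int_gmax). Qed.

Lemma mean1 : mean_ostat P X0 1 =
  fine (\int[leb]_(r in I0) (1 - F r - F r * (1 - F r))%:E).
Proof. rewrite /mean_ostat /ostat2 /=; exact: (congr1 fine int_gmin). Qed.

End QQ.

Lemma mLt (r : R) : measurable [set x : R | x < r]%R.
Proof.
have -> : [set x : R | x < r]%R = `]-oo, r[%classic.
  by apply/seteqP; split => w /=; rewrite in_itv.
exact: measurable_itv.
Qed.

Lemma mGt (r : R) : measurable [set x : R | r < x]%R.
Proof.
have -> : [set x : R | r < x]%R = ~` [set x | x <= r]%R.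
  by apply/seteqP; split => x /=; rewrite ltNge => /negP.
by apply: measurableC; exact: mLe.
Qed.

Lemma mGe (r : R) : measurable [set x : R | r <= x]%R.
Proof.
have -> : [set x : R | r <= x]%R = ~` [set x | x < r]%R.
  by apply/seteqP; split => x /=; rewrite leNgt => /negP.
by apply: measurableC; exact: mLt.
Qed.

Lemma maxE_set (x y c : R) : (Num.max x y = c) <-> ((x <= c /\ y <= c) /\ ~ (x < c /\ y < c))%R.
Proof. rewrite maxEle; case: ifP => h; split; lra. Qed.
Lemma minE_set (x y c : R) : (Num.min x y = c) <-> ((c <= x /\ c <= y) /\ ~ (c < x /\ c < y))%R.
Proof. rewrite minEle; case: ifP => h; split; lra. Qed.

Section PM.
Variable N : {RV P >-> R}.
Hypothesis Nint : forall w, exists m : nat, N w = m%:R.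
Variable n : nat.
Local Notation a := (cdfR P N n%:R).
Local Notation b := (cdfR P N (n%:R - 1)).
Local Notation mu := (distribution P N).
Local Notation Q := (mu \x mu)%E.

Lemma muLt : mu [set x | x < n%:R]%R = b%:E.
Proof.
transitivity (P [set w | N w <= n%:R - 1]%R); last exact: (esym (Pfin (mle N _))).
rewrite /distribution /pushforward; congr (P _); apply/seteqP; split => w /=;
  have [m ->] := Nint w; by rewrite natR_le_sub1 ltr_nat.
Qed.

Lemma muGe : mu [set x | n%:R <= x]%R = (1 - b)%:E.
Proof.
have -> : [set x : R | n%:R <= x]%R = ~` [set x : R | x < n%:R]%R.
  by apply/seteqP; split => x /=; rewrite leNgt => /negP.
rewrite probability_setC; last exact: mLt.
transitivity (1 - mu [set x | x < n%:R]%R)%E; first by [].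
by rewrite muLt EFinB.
Qed.

Lemma pmf2 : pmf_ostat P N 2 n = (a ^+ 2 - b ^+ 2)%R.
Proof.
rewrite /pmf_ostat /ostat2 /=.
pose A : set (R * R) := ([set x : R | x <= n%:R]%R `*` [set x | x <= n%:R]%R).
pose B : set (R * R) := ([set x : R | x < n%:R]%R `*` [set x | x < n%:R]%R).
have mA : measurable A by apply: measurableX; exact: mLe.
have mB : measurable B by apply: measurableX; exact: mLt.
have E : [set z : R * R | Num.max z.1 z.2 = n%:R] = A `\` B.
  by apply/seteqP; split => z /=; rewrite maxE_set.
have hQ : Q (A `\` B) = (a ^+ 2 - b ^+ 2)%:E.
  rewrite measureD //; first last.
    change (Q A < +oo); rewrite (QX N (mLe _) (mLe _)) !(muLe N) -EFinM; exact: ltry.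
  change (Q A - Q (A `&` B) = (a ^+ 2 - b ^+ 2)%:E).
  rewrite setIidr; last by move=> z /= [h1 h2]; split; exact: ltW.
  by rewrite (QX N (mLe _) (mLe _)) (QX N (mLt _) (mLt _)) !(muLe N) muLt -!EFinM -EFinB !expr2.
rewrite E; transitivity (fine (Q (A `\` B))); first by [].
by rewrite hQ.
Qed.

Lemma pmf1 : pmf_ostat P N 1 n = ((1 - b) ^+ 2 - (1 - a) ^+ 2)%R.
Proof.
rewrite /pmf_ostat /ostat2 /=.
pose A : set (R * R) := ([set x : R | n%:R <= x]%R `*` [set x | n%:R <= x]%R).
pose B : set (R * R) := ([set x : R | n%:R < x]%R `*` [set x | n%:R < x]%R).
have mA : measurable A by apply: measurableX; exact: mGe.
have mB : measurable B by apply: measurableX; exact: mGt.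
have E : [set z : R * R | Num.min z.1 z.2 = n%:R] = A `\` B.
  by apply/seteqP; split => z /=; rewrite minE_set.
have hQ : Q (A `\` B) = ((1 - b) ^+ 2 - (1 - a) ^+ 2)%:E.
  rewrite measureD //; first last.
    change (Q A < +oo); rewrite (QX N (mGe _) (mGe _)) !muGe -EFinM; exact: ltry.
  change (Q A - Q (A `&` B) = ((1 - b) ^+ 2 - (1 - a) ^+ 2)%:E).
  rewrite setIidr; last by move=> z /= [h1 h2]; split; exact: ltW.
  by rewrite (QX N (mGe _) (mGe _)) (QX N (mGt _) (mGt _)) !muGe !(muGt N) -!EFinM -EFinB !expr2.
rewrite E; transitivity (fine (Q (A `\` B))); first by [].
by rewrite hQ.
Qed.

End PM.

End Main.

Theorem mainTheorem4 (R : realType) (dT : measure_display)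
  (T : measurableType dT) (P : probability T R)
  (N : {RV P >-> R}) (X : nat -> {RV P >-> R})
  (theta : forall k : nat, {set 'I_k.+1} -> R) :
  (forall w, exists m : nat, N w = m%:R) ->
  (forall j w, 0 < X j w) ->
  (forall j (A : set R), measurable A ->
     distribution P (X j) A = distribution P (X 0%N) A) ->
  (forall k : nat, (1 <= k)%N -> (exists m : nat, 0 < pmfN P N m /\ (k <= m)%N) ->
     fgm_admissible (theta k) /\
     forall (y : R) (x : 'I_k -> R),
       joint_cdf P N X y x =
       (fgm_copula (theta k)
          (fun i : 'I_k.+1 => if unlift ord0 i is Some i'
                              then cdfR P (X 0%N) (x i') else cdfR P N y))%:E) ->
  (forall k : nat, (1 <= k)%N -> (exists m : nat, 0 < pmfN P N m /\ (k <= m)%N) ->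
     forall (s : 'S_k) (y : R) (x : 'I_k -> R),
       joint_cdf_perm P N X s y x = joint_cdf P N X y x) ->
  P.-integrable [set: T] (EFin \o X 0%N) ->
  forall n : nat, 0 < pmfN P N n ->
  let th01 := theta 1%N ([set ord0; ord_max])%SET in
  condexp_eq P (X 0%N) N n =
    \sum_(i0 < 2) \sum_(i1 < 2)
      ((1 + (-1) ^+ (i0 + i1) * th01) / 4
       * (pmf_ostat P N (1 + i0) n / pmfN P N n)
       * mean_ostat P (X 0%N) (1 + i1))
  /\
  condexp_eq P (X 0%N) N n =
    fine ('E_P[X 0%N]) + th01 / 4
      * ((pmf_ostat P N 2 n - pmf_ostat P N 1 n) / pmfN P N n)
      * (mean_ostat P (X 0%N) 2 - mean_ostat P (X 0%N) 1).
Proof.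
move=> Nint Xpos _ Hfgm _ iX n pn th01.
set X0 := X 0%N.
have X0pos : forall w, 0 < X0 w by move=> w; exact: Xpos.
pose F r := cdfR P X0 r.
pose a := cdfR P N n%:R.
pose b := cdfR P N (n%:R - 1).
pose c := a * (1 - a) - b * (1 - b).
pose D := [set w | N w = n%:R].
have mD : measurable D by exact: meq.
have eg : pmfN P N n = a - b.
  have := splitN Nint n measurableT; rewrite !setIT /pr => h.
  rewrite /a /b /cdfR h /pmfN; ring.
have key : forall r, pr P (D `&` [set w | X0 w <= r]) = (a - b) * F r + th01 * c * (F r * (1 - F r)).
  move=> r.
  have [hm|hm] := pselect (exists m : nat, 0 < pmfN P N m /\ (1 <= m)%N).
    have [_ Hj] := Hfgm 1%N isT hm.
    have J : forall y, pr P ([set w | N w <= y] `&` [set w | X0 w <= r]) =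
        cdfR P N y * F r * (1 + th01 * ((1 - cdfR P N y) * (1 - F r))).
      move=> y; have := Hj y (fun _ => r).
      rewrite /joint_cdf fgm2.
      have -> : [set w | N w <= y /\ (forall i : 'I_1, X i w <= r)] =
          [set w | N w <= y] `&` [set w | X0 w <= r].
        apply/seteqP; split => w /=.
          by case=> h1 h2; split => //; exact: (h2 ord0).
        by case=> h1 h2; split => // i; rewrite (ord1 i).
      rewrite /pr => ->; rewrite /= unlift_none.
      by case: unliftP => [j _ | /(congr1 val) //]; rewrite /F /th01.
    have J1 := J n%:R; have J2 := J (n%:R - 1).
    rewrite (splitN Nint n (mle X0 r)) J2 in J1.
    apply: (@addrI _ (cdfR P N (n%:R - 1) * F r * (1 + th01 * ((1 - cdfR P N (n%:R - 1)) * (1 - F r))))).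
    rewrite J1 /c /a /b; ring.
  have h0 : forall m, (0 < m)%N -> pmfN P N m = 0.
    move=> m m0; apply: le_anti; rewrite fine_ge0 ?measure_ge0 // andbT.
    by rewrite leNgt; apply/negP => h; apply: hm; exists m.
  have n0 : n = 0%N.
    by case: n pn {a b c D mD eg th01} => // n' pn; exfalso; apply: hm; exists n'.+1.
  have eB := degen_prI Nint (mle X0 r) h0.
  have ea : a = 1.
    have := degen_prI Nint (mle N 0%:R) h0.
    have -> : [set w | N w = 0%:R] `&` [set w | N w <= 0%:R] = [set w | N w = 0%:R] `&` setT.
      by apply/seteqP; split => w /= [h1 h2] //; split => //; rewrite h1.
    rewrite (degen_prI Nint measurableT h0) /pr probability_setT /= => h1.
    by rewrite /a n0 /cdfR -h1.
  have eb : b = 0.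
    rewrite /b n0 /cdfR.
    have -> : [set w | N w <= 0%:R - 1] = set0.
      apply/seteqP; split => w //=; have [m ->] := Nint w.
      by rewrite natR_le_sub1 ltn0.
    by rewrite measure0.
  rewrite /D n0 eB /c ea eb /F.
  have -> : pr P [set w | X0 w <= r] = cdfR P X0 r by [].
  ring.
pose Y := Yv X0 mD.
have HY : forall w, Y w = if w \in D then X0 w else 0 by move=> w; exact: YvE.
have [EX ti] := ccdf_int X0pos iX.
have qi := qint ti.
pose E0 := fine (\int[lebesgue_measure]_(r in `[0%R, +oo[) (1 - cdfR P X0 r)%:E).
pose Q0 := fine (\int[lebesgue_measure]_(r in `[0%R, +oo[) (cdfR P X0 r * (1 - cdfR P X0 r))%:E).
have EY : ('E_P[Y])%E = ((a - b) * E0 + (- (th01 * c)) * Q0)%:E.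
  rewrite ge0_expectation_ccdf; last exact: (Yv_ge0 X0pos HY).
  transitivity (\int[lebesgue_measure]_(r in `[0%R, +oo[)
     ((a - b) * (1 - cdfR P X0 r) + (- (th01 * c)) * (cdfR P X0 r * (1 - cdfR P X0 r)))%:E)%E.
    apply: eq_integral => r; rewrite inE /= in_itv /= andbT => r0.
    rewrite (ccdfYv mD HY r0) key -eg pmfN_pr; congr EFin; rewrite /F; ring.
  exact: (lin_int _ _ ti qi).
have CE : condexp_eq P X0 N n = ((a - b) * E0 + (- (th01 * c)) * Q0) / (a - b).
  by rewrite /condexp_eq -(EYv HY) EY /= eg.
have EXE : fine ('E_P[X0])%E = E0 by rewrite EX.
have M2 : mean_ostat P X0 2 = E0 + Q0.
  rewrite (mean2 X0pos).
  transitivity (fine (\int[lebesgue_measure]_(r in `[0%R, +oo[)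
     (1 * (1 - cdfR P X0 r) + 1 * (cdfR P X0 r * (1 - cdfR P X0 r)))%:E)).
    by congr fine; apply: eq_integral => r _; rewrite !mul1r.
  by rewrite (lin_int _ _ ti qi) /= !mul1r.
have M1 : mean_ostat P X0 1 = E0 - Q0.
  rewrite (mean1 X0pos).
  transitivity (fine (\int[lebesgue_measure]_(r in `[0%R, +oo[)
     (1 * (1 - cdfR P X0 r) + (-1) * (cdfR P X0 r * (1 - cdfR P X0 r)))%:E)).
    by congr fine; apply: eq_integral => r _; rewrite mul1r mulN1r.
  by rewrite (lin_int _ _ ti qi) /= mul1r mulN1r.
have G2 := pmf2 Nint n.
have G1 := pmf1 Nint n.
have ab0 : a - b != 0 by rewrite -eg; apply: lt0r_neq0.
rewrite CE EXE M1 M2 eg.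
rewrite !big_ord_recr !big_ord0 /= !add0r G1 G2 M1 M2 -/a -/b.
split; rewrite /c; field; exact: ab0.
Qed.
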